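(* Let $G$ be a compact Abelian group with a continuous length function $l$, and let $(H_n)_{n\in\mathbb{N}}$ be closed subgroups of $G$ converging to $G$ for the Hausdorff distance of $d_l(g,g')=l(g^{-1}g')$. For each $n$ let $J_n\subseteq\widehat G$ be the annihilator of $H_n$. Let $F$ be a finite subset of $\widehat G\setminus\{1\}$. Then there exists $N\in\mathbb{N}$ such that $J_n\cap F=\varnothing$ for all $n\ge N$.
   Context: A length function: $l\ge0$, $l(g)=0$ iff $g$ is the unit, symmetric, subadditive. $1$ denotes the trivial character. *)

(* Defs.v *)
From HB Require Import structures.
From mathcomp Require Import all_boot all_order all_algebra.
From mathcomp Require Import complex.
From mathcomp Require Import all_classical all_reals all_analysis.
Import numFieldNormedType.Exports.

Set Implicit Arguments.
Unset Strict Implicit.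
Unset Printing Implicit Defensive.
Import Order.TTheory GRing.Theory Num.Theory.

Local Open Scope classical_set_scope.
Local Open Scope ring_scope.

HB.instance Definition _ (R : rcfType) := PseudoPointedMetric.copy R[i] (R[i])^o.

Section Defs.
Variable R : realType.

Definition length_function (G : zmodType) (l : G -> R) : Prop :=
  [/\ (forall g, 0 <= l g),
      (forall g, l g = 0 <-> g = 0),
      (forall g, l (- g) = l g) &
      (forall g h, l (g + h) <= l g + l h)].

(* d_l(g, g') = l(g^{-1} g'), additively l(-g + g'). *)
Definition dl (G : zmodType) (l : G -> R) (g g' : G) : R := l (- g + g').

Definition hausdorff_dist (T : Type) (d : T -> T -> R) (A B : set T) : \bar R :=
  maxe (ereal_sup [set ereal_inf [set (d a b)%:E | b in B] | a in A])
       (ereal_sup [set ereal_inf [set (d a b)%:E | a in A] | b in B]).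

Definition closed_subgroup (G : topologicalZmodType) (H : set G) : Prop :=
  [/\ closed H, H 0 & (forall x y, H x -> H y -> H (x - y))].

Definition is_character (G : topologicalZmodType) (chi : G -> R[i]) : Prop :=
  [/\ (forall x y, chi (x + y) = chi x * chi y),
      (forall x, `|chi x| = 1) &
      continuous chi].

Definition dual (G : topologicalZmodType) : set (G -> R[i]) :=
  [set chi | is_character chi].

Definition trivial_char (G : topologicalZmodType) : G -> R[i] := fun _ => 1.

Definition annihilator (G : topologicalZmodType) (H : set G) : set (G -> R[i]) :=
  [set chi | @dual G chi /\ (forall h, H h -> chi h = 1)].

End Defs.
Arguments dual {R} G.
Arguments trivial_char {R} G.

(* Main.v *)
Require Import Defs.
From HB Require Import structures.
From mathcomp Require Import all_boot all_order all_algebra.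
From mathcomp Require Import complex.
From mathcomp Require Import all_classical all_reals all_analysis.
Import numFieldNormedType.Exports.
Import Order.TTheory GRing.Theory Num.Theory.
Local Open Scope classical_set_scope.
Local Open Scope ring_scope.
Lemma per_chi (R : realType) (G : topologicalZmodType) (l : G -> R)
    (H : nat -> set G) (chi : G -> R[i]) :
  compact [set: G] ->
  length_function l -> continuous l ->
  (hausdorff_dist (dl l) (H n) [set: G]) @[n --> \oo] --> 0%E ->
  dual G chi -> chi <> trivial_char G ->
  exists N : nat, forall n : nat, (N <= n)%N -> ~ annihilator (H n) chi.
Proof.
move=> cG [l0 l0P lN lD] cl hd [chiM chiN chiC] chi1.
have [g chig] : exists g, chi g != 1.
  apply/not_existsP => Hn; apply: chi1; apply/funext => x.
  by apply/eqP; apply/negPn/negP => /(Hn x).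
have chi0 : chi 0 = 1.
  have : chi 0 * chi 0 = 1 * chi 0 by rewrite mul1r -chiM addr0.
  apply: mulIf; apply/eqP => c0; move: (chiN 0); rewrite c0 normr0 => /eqP.
  by rewrite eq_sym oner_eq0.
pose eps := `|chi g - 1|.
have eps0 : 0 < eps by rewrite normr_gt0 subr_eq0.
have Hc : chi x @[x --> (0 : G)] --> (1 : R[i]) by rewrite -chi0; exact: chiC.
have : \forall x \near (0:G), `|1 - chi x| < eps := @cvgr_dist_lt R[i] R[i]^o _ (nbhs (0:G)) _ chi 1 Hc _ eps0.
move=> Hn.
pose P := [set x : G | `|1 - chi x| < eps].
have U0 : P° 0 by exact: Hn.
have oU : open P° by exact: open_interior.
have sU : P° `<=` P by exact: interior_subset.
pose U := P°.
pose K := ~` U.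
have cK : compact K.
  exact: (subclosed_compact (open_closedC oU) cG).
pose L := l @` K.
have cL : compact L by apply: continuous_compact => //; exact: continuous_subspaceT.
have clL : closed L by apply: compact_closed => //; exact: Rhausdorff.
have L0 : (~` L) 0.
  move=> [x Kx lx]; apply: Kx; move/l0P: lx => ->; exact: U0.
have : nbhs (0:R) (~` L) by apply: open_nbhs_nbhs; split => //; exact: closed_openC.
move=> /nbhs_ballP [d /= d0 Bd].
have d0' : (0 < d%:E)%E by rewrite lte_fin.
have [N _ HN] := hd _ (open_ereal_lt' d0').
exists N => n /HN /= hdn [_ annH].
set Sg := ereal_inf [set (dl l a g)%:E | a in H n].
have Sgle : (Sg <= hausdorff_dist (dl l) (H n) [set: G])%E.
  rewrite /hausdorff_dist le_max; apply/orP; right.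
  by apply: ereal_sup_ubound; exists g.
have /ereal_inf_lt [y [a Ha <-]] : (Sg < d%:E)%E by apply: le_lt_trans hdn.
rewrite lte_fin /dl => lad.
have nL : (~` L) (l (- a + g)).
  apply: Bd; rewrite /ball /= sub0r normrN ger0_norm //.
have Ux : U (- a + g).
  apply: contrapT => nU; apply: nL; exists (- a + g) => //.
have := sU _ Ux; rewrite /P /=.
have E : chi g = chi a * chi (- a + g) by rewrite -chiM addrA subrr add0r.
rewrite (annH a Ha) mul1r in E.
by rewrite -E distrC ltxx.
Qed.

Theorem mainTheorem9 (R : realType) (G : topologicalZmodType) (l : G -> R)
    (H : nat -> set G) (F : set (G -> R[i])) :
  compact [set: G] ->
  length_function l -> continuous l ->
  (forall n, closed_subgroup (H n)) ->
  (hausdorff_dist (dl l) (H n) [set: G]) @[n --> \oo] --> 0%E ->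
  finite_set F ->
  F `<=` dual G `\` [set trivial_char G] ->
  exists N : nat, forall n : nat, (N <= n)%N -> annihilator (H n) `&` F = set0.
Proof.
move=> cG lf cl _ hd fF sF.
have : forall chi, exists N : nat, F chi ->
    forall n, (N <= n)%N -> ~ annihilator (H n) chi.
  move=> chi; have [Fc|nFc] := pselect (F chi); last by exists 0%N.
  have [Dc nc] := sF _ Fc.
  have [N HN] := @per_chi R G l H chi cG lf cl hd Dc nc.
  by exists N.
move=> /choice [f Hf].
have /finite_seqP [s Es] : finite_set (f @` F) by exact: finite_image.
exists (\max_(i <- s) i)%N => n Nn.
apply/seteqP; split => // chi [Ac Fc].
apply: (Hf chi Fc n) => //.
apply: leq_trans Nn.
have : [set` s] (f chi) by rewrite -Es; exists chi.
move=> fs; exact: (@leq_bigmax_seq _ s xpredT id _ fs).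
Qed.
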